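(* Let $R$ be an abelian Rickart $*$-ring and $a,b\in R$. The following are equivalent: (i) $a\leq b$ in the natural partial order; (ii) there exists a projection $e\in R$ with $a=ae=be$; (iii) $ab=a^2=ba$.
   Context: A projection is $e$ with $e=e^2=e^*$. A Rickart $*$-ring is a $*$-ring in which the right annihilator $\{x: ax=0\}$ of every element $a$ is of the form $eR$ for a projection $e$ (such rings have unity). A ring is abelian if all its idempotents are central. Natural partial order: $a\leq b$ iff there is $x\in R$ with $a=xa=xb=ax^*=bx^*$. *)

(* Defs.v *)
From HB Require Import structures.
From mathcomp Require Import all_boot all_algebra.
Set Implicit Arguments. Unset Strict Implicit. Unset Printing Implicit Defensive.
Import GRing.Theory.
Local Open Scope ring_scope.

Definition is_involution (R : pzRingType) (star : R -> R) : Prop :=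
  [/\ forall x y, star (x + y) = star x + star y,
      forall x y, star (x * y) = star y * star x
    & forall x, star (star x) = x].

Definition projection (R : pzRingType) (star : R -> R) (e : R) : Prop :=
  e * e = e /\ star e = e.

Definition rickart (R : pzRingType) (star : R -> R) : Prop :=
  forall a : R, exists e : R, projection star e /\
    forall x : R, a * x = 0 <-> exists y : R, x = e * y.

Definition abelian_ring (R : pzRingType) : Prop :=
  forall e : R, e * e = e -> forall x : R, e * x = x * e.

Definition nat_le (R : pzRingType) (star : R -> R) (a b : R) : Prop :=
  exists x : R, [/\ a = x * a, a = x * b, a = a * star x & a = b * star x].

(* Main.v *)
Require Import Defs.
From HB Require Import structures.
From mathcomp Require Import all_boot all_algebra.
Local Open Scope ring_scope.
Import GRing.Theory.

Section Aux.
Variables (R : pzRingType) (star : R -> R).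
Hypothesis Hstar : is_involution star.

Lemma star1 : star 1 = 1.
Proof.
case: Hstar => _ sM sK.
have := sM (star 1) 1. rewrite !sK !mulr1 => h.
by rewrite -h.
Qed.

Lemma star0 : star 0 = 0.
Proof.
case: Hstar => sD _ _.
have := sD 0 0. rewrite addr0 => h.
by apply: (@addrI _ (star 0)); rewrite addr0 -h.
Qed.

Lemma starN x : star (- x) = - star x.
Proof.
case: Hstar => sD _ _.
have := sD x (- x). rewrite subrr star0 => h.
by apply/eqP; rewrite -(subr0 (star (-x))) h opprD addrA addrC addKr.
Qed.
End Aux.

Theorem mainTheorem8 (R : pzRingType) (star : R -> R)
  (Hstar : is_involution star) (Hrick : rickart star) (Hab : abelian_ring R)
  (a b : R) :
  (nat_le star a b <-> exists e : R, projection star e /\ a = a * e /\ a = b * e) /\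
  (nat_le star a b <-> a * b = a ^+ 2 /\ a ^+ 2 = b * a).
Proof.
have L2 : (exists e : R, projection star e /\ a = a * e /\ a = b * e) -> nat_le star a b.
  case=> e [[ee se] [h1 h2]]; exists e; rewrite se; split => //; by rewrite (Hab e ee).
have L3 : nat_le star a b -> a * b = a ^+ 2 /\ a ^+ 2 = b * a.
  case=> x [h1 h2 h3 h4].
  case: (Hrick x) => f [[ff sf] H].
  have xf : x * f = 0 by apply/H; exists 1; rewrite mulr1.
  have fc := Hab f ff.
  have xsf : star x * f = 0.
    case: (Hstar) => _ sM _.
    by rewrite -sf -sM fc xf (star0 _ _ Hstar).
  have af : a * f = 0 by rewrite h3 -mulrA xsf mulr0.
  have fa : f * a = 0 by rewrite fc.
  have xab : x * (a - b) = 0 by rewrite mulrBr -h1 -h2 subrr.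
  have [y hy] := (proj1 (H (a - b)) xab).
  have fab : f * (a - b) = a - b by rewrite hy mulrA ff.
  split.
  - apply/eqP; rewrite expr2 eq_sym -subr_eq0 -mulrBr -fab mulrA af mul0r //.
  - apply/eqP; rewrite expr2 -subr_eq0 -mulrBl -fab fc -mulrA fa mulr0 //.
have L1 : a * b = a ^+ 2 /\ a ^+ 2 = b * a ->
    exists e : R, projection star e /\ a = a * e /\ a = b * e.
  case=> h1 _.
  case: (Hrick a) => f [[ff sf] H].
  have af : a * f = 0 by apply/H; exists 1; rewrite mulr1.
  have ee : (1 - f) * (1 - f) = 1 - f.
    by rewrite mulrBl mul1r mulrBr mulr1 ff subrr subr0.
  have aba : a * (b - a) = 0 by rewrite mulrBr h1 expr2 subrr.
  have [y hy] := (proj1 (H (b - a)) aba).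
  have fba : f * (b - a) = b - a by rewrite hy mulrA ff.
  have eba : (b - a) * (1 - f) = 0.
    by rewrite -(Hab _ ee) mulrBl mul1r fba subrr.
  exists (1 - f); split; [split|split] => //.
  - case: (Hstar) => sD _ _. by rewrite sD (star1 _ _ Hstar) (starN _ _ Hstar) sf.
  - by rewrite mulrBr mulr1 af subr0.
  - have ae : a * (1 - f) = a by rewrite mulrBr mulr1 af subr0.
    apply/eqP; rewrite eq_sym -subr_eq0 -[X in _ - X]ae -mulrBl eba //.
split; split => //; auto.
Qed.
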